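(* If $G$ is a graph with minimum degree $\delta(G)\ge 2$ and girth $g(G)\ge 5$, and $H$ is any graph, then $\chi_{\mu_2}(G\circ H)\le \chi_{\mu_2}(G)$. This bound is sharp.
   Context: The lexicographic product $G\circ H$ has vertex set $V(G)\times V(H)$, with $(g,h)$ adjacent to $(g',h')$ iff $gg'\in E(G)$, or $g=g'$ and $hh'\in E(H)$. The girth is the length of a shortest cycle. A set $M\subseteq V(X)$ is a $2$-distance mutual-visibility set if for every two vertices $u,v\in M$ there exists a shortest $u,v$-path of length at most $2$ none of whose internal vertices lies in $M$. $\chi_{\mu_2}(X)$ is the minimum cardinality of a partition of $V(X)$ into $2$-distance mutual-visibility sets. *)

(* Defs.v *)
From mathcomp Require Import all_boot.
Set Implicit Arguments. Unset Strict Implicit. Unset Printing Implicit Defensive.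

Definition simple_graph (T : finType) (e : rel T) : Prop :=
  symmetric e /\ irreflexive e.

Definition lex_rel (T U : finType) (e : rel T) (f : rel U) : rel (T * U) :=
  fun p q => e p.1 q.1 || ((p.1 == q.1) && f p.2 q.2).

Definition min_deg_ge (T : finType) (e : rel T) (k : nat) : Prop :=
  forall x : T, k <= #|[set y | e x y]|.

(* Girth g(G) >= k: G has no cycle (sequence of >= 3 distinct vertices, consecutive
   ones adjacent, last adjacent to first) of length < k.  Acyclic graphs have infinite girth. *)
Definition girth_ge (T : finType) (e : rel T) (k : nat) : Prop :=
  forall s : seq T, uniq s -> 3 <= size s -> size s < k -> ~~ cycle e s.

(* M is a 2-distance mutual-visibility set: for all distinct u, v in M there is a
   shortest u,v-path of length <= 2 with no internal vertex in M, i.e. either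
   d(u,v) = 1 (u,v adjacent, no internal vertices), or d(u,v) = 2 (u,v non-adjacent)
   and some common neighbour w (the internal vertex of a shortest path) is not in M.
   (For u = v the trivial path of length 0 works.) *)
Definition mv2 (T : finType) (e : rel T) (M : {set T}) : bool :=
  [forall u in M, forall v in M,
     (u != v) ==>
     (e u v || (~~ e u v && [exists w, [&& e u w, e w v & w \notin M]]))].

(* chi_mu2(G): minimum cardinality of a partition of V(G) into 2-distance
   mutual-visibility sets.  (The partition into singletons always qualifies and has
   #|T| blocks, so #|T| is a valid default for the minimum.) *)
Definition chi_mu2 (T : finType) (e : rel T) : nat :=
  \big[minn/#|T|]_(P : {set {set T}} |
                     partition P [set: T] && [forall M in P, mv2 e M]) #|P|.

(* Main.v *)
Require Import Defs.
From mathcomp Require Import all_boot.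

Lemma nb_out (T : finType) (e : rel T) (M : {set T}) g :
  simple_graph e -> min_deg_ge e 2 -> girth_ge e 5 -> mv2 e M -> g \in M ->
  exists2 x, e g x & x \notin M.
Proof.
move=> [se ie] md gi mv gM.
have /card_gt1P [x1 [x2 [x1N x2N x12]]] := md g.
rewrite !inE in x1N x2N.
case: (boolP (x1 \in M)) => x1M; last by exists x1.
case: (boolP (x2 \in M)) => x2M; last by exists x2.
exfalso.
move: mv => /forallP/(_ x1)/implyP/(_ x1M)/forallP/(_ x2)/implyP/(_ x2M)/implyP/(_ x12).
have gx1 : g != x1 by apply: contraTneq x1N => <-; rewrite ie.
have gx2 : g != x2 by apply: contraTneq x2N => <-; rewrite ie.
case/orP => [e12 | /andP [_ /existsP [w /and3P [e1w ew2 wM]]]].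
- apply: (negP (gi [:: g; x1; x2] _ _ _)) => //=.
  + by rewrite !inE negb_or gx1 gx2 x12.
  + by rewrite x1N e12 (se x2 g) x2N.
- have wg : w != g by apply: contraNneq wM => ->.
  have x1w : x1 != w by apply: contraTneq e1w => <-; rewrite ie.
  have wx2 : w != x2 by apply: contraTneq ew2 => <-; rewrite ie.
  apply: (negP (gi [:: g; x1; w; x2] _ _ _)) => //=.
  + by rewrite !inE !negb_or gx1 gx2 x12 x1w wx2 eq_sym wg.
  + by rewrite x1N e1w ew2 (se x2 g) x2N.
Qed.

Lemma mv2_prod (T U : finType) (e : rel T) (f : rel U) (M : {set T}) :
  simple_graph e -> min_deg_ge e 2 -> girth_ge e 5 -> mv2 e M ->
  mv2 (lex_rel e f) (setX M [set: U]).
Proof.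
move=> sg md gi mv; have [se ie] := sg.
apply/forallP => [[g h]]; apply/implyP => uM; apply/forallP => [[g' h']].
apply/implyP => vM; apply/implyP => uv.
move: uM vM; rewrite !inE /= !andbT => uM vM.
rewrite /lex_rel /=.
case: (eqVneq g g') => [E | gg'].
- subst g'.
  have hh' : h != h' by apply/eqP => E; move: uv; rewrite E eqxx.
  rewrite ie /=.
  case: (f h h') => //=.
  have [x gx xM] := nb_out _ _ _ _ sg md gi mv uM.
  apply/existsP; exists (x, h) => /=.
  by rewrite (se x g) gx /= !inE /= (negbTE xM).
- move: mv => /forallP/(_ g)/implyP/(_ uM)/forallP/(_ g')/implyP/(_ vM)/implyP/(_ gg').
  case/orP => [-> // | /andP [ne /existsP [w /and3P [gw wg' wM]]]].
  rewrite (negbTE ne) /=; apply/existsP; exists (w, h) => /=.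
  by rewrite gw wg' /= !inE /= (negbTE wM).
Qed.

Lemma bigmin_le_seq (I : eqType) (r : seq I) (p : pred I) (F : I -> nat) d j :
  j \in r -> p j -> \big[minn/d]_(i <- r | p i) F i <= F j.
Proof.
elim: r => // a r IH; rewrite inE big_cons; case/orP => [/eqP <- pj | jr pj].
  by rewrite pj geq_minl.
case: (p a); last exact: IH.
exact: leq_trans (geq_minr _ _) (IH jr pj).
Qed.

Lemma chi_le (T : finType) (e : rel T) (Q : {set {set T}}) :
  partition Q [set: T] -> [forall M in Q, mv2 e M] -> chi_mu2 e <= #|Q|.
Proof.
move=> pQ mQ; rewrite /chi_mu2; apply: bigmin_le_seq; first exact: mem_index_enum.
by rewrite pQ mQ.
Qed.

Lemma chi_le_idx (T : finType) (e : rel T) : chi_mu2 e <= #|T|.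
Proof.
rewrite /chi_mu2; elim/big_rec: _ => // i x _ hx.
exact: leq_trans (geq_minr _ _) hx.
Qed.

Lemma map_ok (T U : finType) (e : rel T) (f : rel U) (h0 : U) (P : {set {set T}}) :
  simple_graph e -> min_deg_ge e 2 -> girth_ge e 5 ->
  partition P [set: T] -> [forall M in P, mv2 e M] -> chi_mu2 (lex_rel e f) <= #|P|.
Proof.
move=> sg md gi pP mP.
have [/eqP cP tP nP] := and3P pP.
set Q := [set setX M [set: U] | M in P].
apply: leq_trans (chi_le _ _ Q _ _) (leq_imset_card _ _).
- apply/and3P; split.
  + apply/eqP/setP => [[g h]]; rewrite inE; apply/bigcupP.
    have : g \in cover P by rewrite cP.
    move/bigcupP => [M MP gM]; exists (setX M [set: U]); first exact: imset_f.
    by rewrite !inE gM.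
  + apply/trivIsetP => A B /imsetP [M1 M1P ->] /imsetP [M2 M2P ->] ne.
    have ne' : M1 != M2 by apply: contraNneq ne => ->.
    have d := (trivIsetP tP) _ _ M1P M2P ne'.
    rewrite -setI_eq0; apply/eqP/setP => [[g h]]; rewrite !inE /= !andbT.
    apply/negP => /andP [g1 g2]; by rewrite (disjointFr d g1) in g2.
  + apply/imsetP => [[M MP E]].
    have : M != set0 by apply: contraNneq nP => <-.
    case/set0Pn => g gM.
    have : (g, h0) \in setX M [set: U] by rewrite !inE gM.
    by rewrite -E inE.
- apply/forallP => A; apply/implyP => /imsetP [M MP ->].
  apply: mv2_prod => //.
  by move/forallP: mP => /(_ M)/implyP/(_ MP).
Qed.

Lemma part1 (T U : finType) (e : rel T) (f : rel U) :
      simple_graph e -> simple_graph f ->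
      min_deg_ge e 2 -> girth_ge e 5 ->
      chi_mu2 (lex_rel e f) <= chi_mu2 e.
Proof.
move=> sg sf md gi.
case: (pickP (@predT U)) => [h0 _ | hU]; last first.
  apply: leq_trans (chi_le_idx _ _) _.
  by rewrite card_prod (eq_card0 hU) muln0.
rewrite {2}/chi_mu2.
apply: (big_ind (fun x => chi_mu2 (lex_rel e f) <= x)).
- set P1 := preim_partition id [set: T].
  apply: leq_trans (map_ok _ _ _ f h0 P1 sg md gi _ _) _.
  + exact: preim_partitionP.
  + apply/forallP => A; apply/implyP => /imsetP [x _ ->].
    apply/forallP => u; apply/implyP; rewrite inE => /andP [_ /eqP <-].
    apply/forallP => v; apply/implyP; rewrite inE => /andP [_ /eqP <-].
    by rewrite eqxx.
  + by apply: leq_trans (leq_imset_card _ _) _; rewrite cardsT.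
- by move=> x y hx hy; rewrite leq_min hx hy.
- move=> P /andP [pP mP]; exact: map_ok h0 P sg md gi pP mP.
Qed.

Definition V := option (option (option (option (option unit)))).
Definition idx (x : V) : nat := match x with None => 0 | Some None => 1 | Some (Some None) => 2
 | Some (Some (Some None)) => 3 | Some (Some (Some (Some None))) => 4 | _ => 5 end.
Definition c6 : rel V := fun i j => (idx j == (idx i).+1 %% 6) || (idx i == (idx j).+1 %% 6).
Ltac vc := case=> [[[[[[]|]|]|]|]|].

Lemma c6_sym : symmetric c6.
Proof. move=> x y; rewrite /c6 orbC //. Qed.
Lemma c6_irr : irreflexive c6.
Proof. by vc. Qed.

Lemma c6_deg : min_deg_ge c6 2.
Proof.
move=> x; apply/card_gt1P.
move: x; vc; [exists (Some (Some (Some (Some None)))), None | exists (Some (Some (Some None))), (Some (Some (Some (Some (Some tt))))) | exists (Some (Some None)), (Some (Some (Some (Some None)))) | exists (Some None), (Some (Some (Some None))) | exists None, (Some (Some None)) | exists (Some None), (Some (Some (Some (Some (Some tt)))))]; by rewrite !inE; split.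
Qed.

Lemma c6_girth : girth_ge c6 5.
Proof.
case=> [|a [|b [|c [|d [|x s]]]]] //= Hu _ _.
  by move: a b c Hu; vc; vc; vc.
by move: a b c d Hu; vc; vc; vc; vc.
Qed.

Lemma c6_mv (u v : V) : odd (idx u) == odd (idx v) -> u != v ->
  c6 u v || (~~ c6 u v && [exists w, [&& c6 u w, c6 w v & odd (idx w) != odd (idx u)]]).
Proof.
move: u v; vc; vc => //= _ _; apply/existsP;
  first [ by exists None | by exists (Some None) | by exists (Some (Some None))
        | by exists (Some (Some (Some None))) | by exists (Some (Some (Some (Some None))))
        | by exists (Some (Some (Some (Some (Some tt))))) ].
Qed.

Lemma chi_ge2 (T : finType) (e : rel T) (u v : T) :
  u != v -> ~~ e u v -> 2 <= chi_mu2 e.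
Proof.
move=> uv euv; rewrite /chi_mu2.
apply: (big_ind (fun x => 2 <= x)).
- by apply/card_gt1P; exists u, v.
- by move=> x y hx hy; rewrite leq_min hx hy.
- move=> P /andP [pP mP]; rewrite ltnNge; apply/negP => hP.
  have [/eqP cP _ _] := and3P pP.
  move: hP; rewrite leq_eqVlt ltnS leqn0 => /orP [/cards1P [B EB] | /eqP /cards0_eq EP].
  + move: cP; rewrite EB cover1 => EBT.
    move/forallP: mP => /(_ B); rewrite EB set11 /= EBT.
    move/forallP/(_ u)/implyP/(_ (in_setT u))/forallP/(_ v)/implyP/(_ (in_setT v))/implyP/(_ uv).
    rewrite (negbTE euv) /=; case/existsP => w /and3P [_ _]; by rewrite in_setT.
  + move: cP; rewrite EP /cover big_set0 => /setP /(_ u); by rewrite !inE.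
Qed.

Lemma c6_chi_le2 : chi_mu2 c6 <= 2.
Proof.
set P2 := preim_partition (fun x => odd (idx x)) [set: V].
apply: (@leq_trans #|P2|); last first.
  set B := fun b => [set y in [set: V] | b == odd (idx y)].
  apply: (@leq_trans #|[set B true; B false]|).
    apply/subset_leq_card/subsetP => A /imsetP [x _ ->]; rewrite !inE.
    by case: (odd (idx x)); rewrite eqxx ?orbT.
  by rewrite cards2; case: (_ != _).
apply: chi_le _ _ _; first exact: preim_partitionP.
apply/forallP => A; apply/implyP => /imsetP [x _ ->].
apply/forallP => u; apply/implyP; rewrite inE => /andP [_ /eqP hu].
apply/forallP => v; apply/implyP; rewrite inE => /andP [_ /eqP hv].
apply/implyP => uv.
have := c6_mv u v _ uv; rewrite -hu -hv eqxx => /(_ isT).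
case/orP => [-> // | /andP [ne /existsP [w /and3P [a b c]]]].
rewrite ne /=; apply/orP; right; apply/existsP; exists w; rewrite a b /= inE /= eq_sym.
by rewrite in_setT (negbTE c).
Qed.

Theorem theorem4p2 :
  (forall (T U : finType) (e : rel T) (f : rel U),
      simple_graph e -> simple_graph f ->
      min_deg_ge e 2 -> girth_ge e 5 ->
      chi_mu2 (lex_rel e f) <= chi_mu2 e) /\
  (* sharpness: the bound is attained *)
  (exists (T U : finType) (e : rel T) (f : rel U),
      [/\ 0 < #|T| /\ 0 < #|U|, simple_graph e /\ simple_graph f, min_deg_ge e 2,
          girth_ge e 5 &
          chi_mu2 (lex_rel e f) = chi_mu2 e]).
Proof.
split; first exact: part1.
have sg : simple_graph c6 by split; [exact: c6_sym | exact: c6_irr].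
have sf : simple_graph (fun _ _ : unit => false) by [].
exists V, unit, c6, (fun _ _ => false); split => //.
- by split; apply/card_gt0P; [exists None | exists tt].
- exact: c6_deg.
- exact: c6_girth.
- apply/eqP; rewrite eqn_leq part1 //=; [|exact: c6_deg|exact: c6_girth].
  apply: leq_trans c6_chi_le2 _.
  by apply: (chi_ge2 _ _ (None, tt) (Some (Some None), tt)).
Qed.
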